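(* Fix a single machine with nonnegative real parameters $k^A,k^B,t^A,t^B$ and a real bound $L$. For integers $a,b\ge 0$ let $f(a,b)$ be the minimum processing time for this machine to process $a$ A-jobs and $b$ B-jobs (as defined in the context). Then for every fixed integer $a\ge 0$, the set $\{b\in\mathbb{Z}_{\ge 0} : f(a,b)\le L\}$ consists of consecutive integers, i.e. if $b_1<b_2<b_3$ are nonnegative integers with $f(a,b_1)\le L$ and $f(a,b_3)\le L$, then $f(a,b_2)\le L$.
   Context: A machine processes jobs of two types, A and B, in batches. A schedule for the task-combination $(a,b)$ ($a$ A-jobs and $b$ B-jobs) is a finite sequence of batches, each batch being a nonempty group of jobs of a single type, such that any two consecutive batches in the sequence are of different types, and in total exactly $a$ A-jobs and $b$ B-jobs are processed. An A-batch of $x$ jobs takes $t^A+k^A x^2$ time units and a B-batch of $x$ jobs takes $t^B+k^B x^2$ time units; the time of a schedule is the sum of the times of its batches (the empty schedule, used for $(0,0)$, takes time $0$). $f(a,b)$ is the minimum time over all schedules for $(a,b)$. *)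

(* Defs.v *)
From HB Require Import structures.
From mathcomp Require Import all_boot all_order all_algebra.
From mathcomp Require Import boolp classical_sets reals.
Set Implicit Arguments. Unset Strict Implicit. Unset Printing Implicit Defensive.
Import Order.TTheory GRing.Theory Num.Theory.
Local Open Scope ring_scope.
Local Open Scope classical_set_scope.

(* A batch is (is_A, size): is_A = true for an A-batch, false for a B-batch. *)
Definition batch := (bool * nat)%type.

Definition valid_schedule (a b : nat) (s : seq batch) : bool :=
  [&& all (fun p : batch => 0 < p.2)%N s,
      sorted (fun p q : batch => p.1 != q.1) s,
      sumn [seq p.2 | p <- s & p.1] == a
    & sumn [seq p.2 | p <- s & ~~ p.1] == b].

Section Times.
Variable R : realType.
Variables (kA kB tA tB : R).

Definition batch_time (p : batch) : R :=
  if p.1 then tA + kA * (p.2%:R) ^+ 2 else tB + kB * (p.2%:R) ^+ 2.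

Definition sched_time (s : seq batch) : R := \sum_(p <- s) batch_time p.

(* f(a,b): minimum time over all schedules for (a,b) (the set of schedule
   times is finite and nonempty, so the infimum is attained). *)
Definition f (a b : nat) : R :=
  inf [set sched_time s | s in [set s | valid_schedule a b s]].
End Times.

(* Main.v *)
Require Import Defs.
From HB Require Import structures.
From mathcomp Require Import all_boot all_order all_algebra.
From mathcomp Require Import boolp classical_sets reals.
From mathcomp Require Import zify ring lra.
Import Order.TTheory GRing.Theory Num.Theory.
Local Open Scope ring_scope.

Set Implicit Arguments. Unset Strict Implicit.

Definition alt (p q : batch) : bool := p.1 != q.1.
Definition As (s : seq batch) := [seq p.2 | p <- s & p.1].
Definition Bs (s : seq batch) := [seq p.2 | p <- s & ~~ p.1].

Fixpoint il (b : bool) (l1 l2 : seq nat) : seq batch :=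
  match l1, l2 with
  | x :: l1', y :: l2' => (b, x) :: (~~ b, y) :: il b l1' l2'
  | x :: _, [::] => [:: (b, x)]
  | [::], y :: _ => [:: (~~ b, y)]
  | [::], [::] => [::]
  end.

Definition mk (lA lB : seq nat) : seq batch :=
  if (size lB <= size lA)%N then il true lA lB else il false lB lA.

Lemma il_As b l1 l2 : (size l2 <= size l1 <= (size l2).+1)%N ->
  As (il b l1 l2) = if b then l1 else l2.
Proof.
elim: l1 l2 => [|x l1 IH] [|y l2] //=.
- by case: b.
- by clear IH; move=> H; case: l1 H => //= _; rewrite /As /=; case: b.
- move=> /= H; move: (IH l2 H); rewrite /As /=; clear IH; case: b => /= ->; by [].
Qed.

Lemma il_Bs b l1 l2 : (size l2 <= size l1 <= (size l2).+1)%N ->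
  Bs (il b l1 l2) = if b then l2 else l1.
Proof.
elim: l1 l2 => [|x l1 IH] [|y l2] //=.
- by case: b.
- by clear IH; move=> H; case: l1 H => //= _; rewrite /Bs /=; case: b.
- move=> /= H; move: (IH l2 H); rewrite /Bs /=; clear IH; case: b => /= ->; by [].
Qed.

Lemma il_path b l1 l2 x0 : (size l2 <= size l1)%N -> x0.1 = ~~ b ->
  path alt x0 (il b l1 l2).
Proof.
elim: l1 l2 x0 => [|x l1 IH] [|y l2] x0 //= H E.
- by rewrite /alt E andbT; case: b {IH E}.
- rewrite {1 2}/alt E /= IH //.
  + by case: b {IH E}.
Qed.

Lemma il_sorted b l1 l2 : (size l2 <= size l1)%N -> sorted alt (il b l1 l2).
Proof. move=> H; apply: (@path_sorted _ _ (~~ b, 0%N)); exact: il_path. Qed.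

Lemma il_pos b l1 l2 : all (fun x => 0 < x)%N l1 -> all (fun x => 0 < x)%N l2 ->
  all (fun p : batch => 0 < p.2)%N (il b l1 l2).
Proof.
elim: l1 l2 => [|x l1 IH] [|y l2] //=.
- by move=> _ /andP[->].
- by move=> /andP[->].
- by move=> /andP[-> H1] /andP[-> H2]; rewrite IH.
Qed.

Lemma mk_valid lA lB : (size lA <= (size lB).+1)%N -> (size lB <= (size lA).+1)%N ->
  all (fun x => 0 < x)%N lA -> all (fun x => 0 < x)%N lB ->
  [/\ valid_schedule (sumn lA) (sumn lB) (mk lA lB), As (mk lA lB) = lA & Bs (mk lA lB) = lB].
Proof.
move=> h1 h2 pA pB; rewrite /mk.
case: leqP => h.
  have hs : (size lB <= size lA <= (size lB).+1)%N by rewrite h h1.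
  rewrite /valid_schedule il_pos ?il_sorted //=.
  have := il_As true hs; have := il_Bs true hs; rewrite /As /Bs /= => -> ->.
  by rewrite !eqxx.
have hs : (size lA <= size lB <= (size lA).+1)%N by rewrite h2 ltnW.
rewrite /valid_schedule il_pos ?il_sorted ?(ltnW h) //=.
have := il_As false hs; have := il_Bs false hs; rewrite /As /Bs /= => -> ->.
by rewrite !eqxx.
Qed.

Lemma alt_count_path s x : path alt x s ->
  let dA := count (fun p : batch => p.1) (x :: s) in
  let dB := count (fun p : batch => ~~ p.1) (x :: s) in
  if x.1 then (dB <= dA <= dB.+1)%N else (dA <= dB <= dA.+1)%N.
Proof.
elim: s x => [|y s IH] x /=.
  by case: x.1.
move=> /andP[hxy hp]; have := IH y hp => /=.
move: hxy; rewrite /alt; case: x.1; case: y.1 => //= _; lia.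
Qed.

Lemma alt_count s : sorted alt s ->
  (size (As s) <= (size (Bs s)).+1)%N /\ (size (Bs s) <= (size (As s)).+1)%N.
Proof.
case: s => [|x s] //= hp.
have := alt_count_path hp => /=.
rewrite /As /Bs !size_map !size_filter /=.
case: x.1 => /=; set u := count [eta fst] s; set v := count (fun p : batch => ~~ p.1) s; rewrite -/v; lia.
Qed.

Section Sq.
Variable R : realType.

Definition Sq (l : seq nat) : R := \sum_(x <- l) (x%:R) ^+ 2.

Lemma sq_lb (x j : nat) :
  (2 * j%:R + 1) * x%:R - j%:R * (j%:R + 1) <= (x%:R ^+ 2 : R).
Proof.
have [h|h] := leqP x j.
  have h' : (x%:R <= j%:R :> R) by rewrite ler_nat.
  nra.
have h' : (j.+1%:R <= x%:R :> R) by rewrite ler_nat.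
rewrite -natr1 in h'.
nra.
Qed.

Lemma Sq_lb (l : seq nat) (j : nat) :
  (2 * j%:R + 1) * (sumn l)%:R - (size l)%:R * (j%:R * (j%:R + 1)) <= Sq l.
Proof.
rewrite /Sq; elim: l => [|x l IH]; first by rewrite big_nil /= !mul0r mulr0 subr0.
rewrite big_cons /= natrD -addn1 natrD.
have := sq_lb x j; lra.
Qed.

Lemma Sq_eq (l : seq nat) (j : nat) :
  all (fun x => (x == j) || (x == j.+1)) l ->
  Sq l = (2 * j%:R + 1) * (sumn l)%:R - (size l)%:R * (j%:R * (j%:R + 1)).
Proof.
rewrite /Sq; elim: l => [|x l IH]; first by rewrite big_nil /= !mul0r mulr0 subr0.
rewrite big_cons /= => /andP[hx /IH ->].
rewrite natrD -addn1 natrD.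
case/orP: hx => /eqP ->; rewrite ?(natrD _ j 1); ring.
Qed.

Lemma cost_eq (t k : R) (l : seq nat) :
  \sum_(x <- l) (t + k * x%:R ^+ 2) = (size l)%:R * t + k * Sq l.
Proof.
rewrite /Sq; elim: l => [|x l IH]; first by rewrite !big_nil mul0r mulr0 addr0.
rewrite !big_cons IH /= -natr1; ring.
Qed.

Lemma time_split (kA kB tA tB : R) s :
  sched_time kA kB tA tB s =
  ((size (As s))%:R * tA + kA * Sq (As s)) + ((size (Bs s))%:R * tB + kB * Sq (Bs s)).
Proof.
rewrite -!cost_eq /sched_time /As /Bs.
elim: s => [|[[] x] s IH]; first by rewrite !big_nil addr0.
- by rewrite /= !big_cons IH /batch_time /=; ring.
- by rewrite /= !big_cons IH /batch_time /=; ring.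
Qed.

End Sq.

Local Close Scope ring_scope.

Definition bal (m q : nat) : seq nat :=
  nseq (m %% q) (m %/ q).+1 ++ nseq (q - m %% q) (m %/ q).

Lemma bal_props m q : (0 < q)%N ->
  [/\ size (bal m q) = q, sumn (bal m q) = m,
      all (fun x => (x == m %/ q) || (x == (m %/ q).+1)) (bal m q)
    & (q <= m)%N -> all (fun x => 0 < x)%N (bal m q)].
Proof.
move=> hq; rewrite /bal size_cat !size_nseq sumn_cat !sumn_nseq all_cat.
have hr : (m %% q < q)%N by rewrite ltn_pmod.
split.
- lia.
- have E := divn_eq m q; move: hr E.
  move: (m %/ q) (m %% q) => d r hr E.
  rewrite mulnBr; have : (d * r <= d * q)%N by rewrite leq_mul2l ltnW ?orbT.
  nia.
- by rewrite all_cat; apply/andP; split; apply/allP => x /nseqP [-> _]; rewrite eqxx ?orbT.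
- move=> hqm; have hd : (0 < m %/ q)%N by rewrite divn_gt0.
  by apply/andP; split; apply/allP => x /nseqP [-> _].
Qed.

Local Open Scope ring_scope.

Lemma size_le_sumn (l : seq nat) : all (fun x => 0 < x)%N l -> (size l <= sumn l)%N.
Proof. elim: l => [|x l IH] //= /andP[hx /IH]; lia. Qed.

Lemma all_pos_As s : all (fun p : batch => 0 < p.2)%N s -> all (fun x => 0 < x)%N (As s).
Proof. move=> h; rewrite /As all_map; apply/allP => p; rewrite mem_filter => /andP[_ hp]; exact: (allP h). Qed.
Lemma all_pos_Bs s : all (fun p : batch => 0 < p.2)%N s -> all (fun x => 0 < x)%N (Bs s).
Proof. move=> h; rewrite /Bs all_map; apply/allP => p; rewrite mem_filter => /andP[_ hp]; exact: (allP h). Qed.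

Lemma all_ones n : all (fun x => 0 < x)%N (nseq n 1%N).
Proof. by apply/allP => x /nseqP [->]. Qed.
Lemma Sq_ones (R : realType) n : Sq R (nseq n 1%N) = n%:R.
Proof. by elim: n => [|n IH]; rewrite /Sq ?big_nil // big_cons -/(Sq R _) IH expr1n -addn1 natrD addrC. Qed.
Lemma sumn_ones n : sumn (nseq n 1%N) = n.
Proof. by rewrite sumn_nseq mul1n. Qed.

Section Key.
Variable R : realType.
Variables (kA kB tA tB : R).
Hypotheses (hkA : 0 <= kA) (hkB : 0 <= kB) (htA : 0 <= tA) (htB : 0 <= tB).
Local Notation T := (sched_time kA kB tA tB).

Lemma Sq_ge_sumn (l : seq nat) : (sumn l)%:R <= Sq R l.
Proof. have := Sq_lb R l 0; rewrite mulr0 add0r mul1r mul0r mulr0 subr0; by []. Qed.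

Lemma key a b1 b2 b3 s1 s3 : (b1 < b2)%N -> (b2 < b3)%N ->
  valid_schedule a b1 s1 -> valid_schedule a b3 s3 ->
  exists s2, valid_schedule a b2 s2 /\ (T s2 <= T s1 \/ T s2 <= T s3).
Proof.
move=> h12 h23 /and4P[pos1 alt1 /eqP sa1 /eqP sb1] /and4P[pos3 alt3 /eqP sa3 /eqP sb3].
change (sumn (As s1) = a) in sa1; change (sumn (Bs s1) = b1) in sb1.
change (sumn (As s3) = a) in sa3; change (sumn (Bs s3) = b3) in sb3.
have [hc1 hc1'] := alt_count alt1; have [hc3 hc3'] := alt_count alt3.
have pA1 := all_pos_As pos1; have pB1 := all_pos_Bs pos1.
have pA3 := all_pos_As pos3; have pB3 := all_pos_Bs pos3.
have hn1 := size_le_sumn pB1; have hn3 := size_le_sumn pB3.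
have hp1 := size_le_sumn pA1; have hp3 := size_le_sumn pA3.
rewrite sb1 in hn1; rewrite sb3 in hn3; rewrite sa1 in hp1; rewrite sa3 in hp3.
have SB3 := Sq_ge_sumn (Bs s3); rewrite sb3 in SB3.
have SB1 := Sq_ge_sumn (Bs s1); rewrite sb1 in SB1.
have n3pos : (0 < size (Bs s3))%N.
  move: sb3 h23; case: (Bs s3) => [|x l] // /= <-; by rewrite ltn0.
have T3E := time_split kA kB tA tB s3; have T1E := time_split kA kB tA tB s1.
set p1 := size (As s1) in hc1 hc1' hp1 T1E *; set n1 := size (Bs s1) in hc1 hc1' hn1 T1E *.
set p3 := size (As s3) in hc3 hc3' hp3 T3E *; set n3 := size (Bs s3) in hc3 hc3' hn3 T3E n3pos *.
have [hA|hB] := leqP n3 b2.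
- (* shrink the B-batches *)
  have [bs bsum ball bpos] := bal_props b2 n3pos.
  have bp := bpos hA.
  have hs1 : (size (As s3) <= (size (bal b2 n3)).+1)%N by rewrite bs.
  have hs2 : (size (bal b2 n3) <= (size (As s3)).+1)%N by rewrite bs.
  have [hv hAs hBs] := mk_valid hs1 hs2 pA3 bp.
  exists (mk (As s3) (bal b2 n3)); split.
    by move: hv; rewrite sa3 bsum.
  right; rewrite T3E time_split hAs hBs bs.
  rewrite (Sq_eq R ball) bsum bs.
  have := Sq_lb R (Bs s3) (b2 %/ n3); rewrite sb3 -/n3.
  set j := (b2 %/ n3)%:R.
  have hb : (b2%:R <= b3%:R :> R) by rewrite ler_nat ltnW.
  have hj : 0 <= 2 * j + 1 by have := ler0n R (b2 %/ n3); rewrite -/j; lra.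
  move=> hl.
  have : (2 * j + 1) * b2%:R <= (2 * j + 1) * b3%:R by rewrite ler_wpM2l.
  move=> h2.
  have : kB * ((2 * j + 1) * b2%:R - n3%:R * (j * (j + 1))) <= kB * Sq R (Bs s3).
    by rewrite ler_wpM2l //; lra.
  lra.
have [hB1|hB2] := leqP p3 b2.+1.
- (* use singleton B-batches *)
  have hs1 : (size (As s3) <= (size (nseq b2 1%N)).+1)%N by rewrite size_nseq -/p3.
  have hs2 : (size (nseq b2 1%N) <= (size (As s3)).+1)%N.
    by rewrite size_nseq -/p3; apply: leq_trans (ltnW hB) hc3'.
  have [hv hAs hBs] := mk_valid hs1 hs2 pA3 (all_ones b2).
  exists (mk (As s3) (nseq b2 1)); split.
    by move: hv; rewrite sa3 sumn_ones.
  right; rewrite T3E time_split hAs hBs size_nseq Sq_ones -/p3.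
  have hb : (b2%:R <= n3%:R :> R) by rewrite ler_nat ltnW.
  have hb' : (b2%:R <= b3%:R :> R) by rewrite ler_nat ltnW.
  have : b2%:R * tB <= n3%:R * tB by rewrite ler_wpM2r.
  have : kB * b2%:R <= kB * Sq R (Bs s3) by rewrite ler_wpM2l //; lra.
  lra.
(* rebalance the A-batches *)
have q0 : (0 < b2.+1)%N by [].
have [bs bsum ball bpos] := bal_props a q0.
have bp : all (fun x => 0 < x)%N (bal a b2.+1) by apply: bpos; apply: leq_trans (ltnW hB2) hp3.
have hs1 : (size (bal a b2.+1) <= (size (nseq b2 1%N)).+1)%N by rewrite bs size_nseq.
have hs2 : (size (nseq b2 1%N) <= (size (bal a b2.+1)).+1)%N by rewrite bs size_nseq; apply: leqW; apply: leqnSn.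
have [hv hAs hBs] := mk_valid hs1 hs2 bp (all_ones b2).
exists (mk (bal a b2.+1) (nseq b2 1)); split.
  by move: hv; rewrite bsum sumn_ones.
rewrite time_split hAs hBs size_nseq Sq_ones bs (Sq_eq R ball) bsum bs -natr1.
have LA1 := Sq_lb R (As s1) (a %/ b2.+1); rewrite sa1 -/p1 in LA1.
have LA3 := Sq_lb R (As s3) (a %/ b2.+1); rewrite sa3 -/p3 in LA3.
move: LA1 LA3; set j := (a %/ b2.+1)%:R => LA1 LA3.
set J := j * (j + 1).
set W := (2 * j + 1) * a%:R.
have k1 : kA * (W - p1%:R * J) <= kA * Sq R (As s1) by rewrite ler_wpM2l.
have k3 : kA * (W - p3%:R * J) <= kA * Sq R (As s3) by rewrite ler_wpM2l.
have e1 : kB * b1%:R <= kB * Sq R (Bs s1) by rewrite ler_wpM2l.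
have e3 : kB * b3%:R <= kB * Sq R (Bs s3) by rewrite ler_wpM2l.
have f1 : (n1%:R * kB <= b1%:R * kB) by rewrite ler_wpM2r // ler_nat.
have f3 : (n3%:R * kB <= b3%:R * kB) by rewrite ler_wpM2r // ler_nat.
have g1 : (p1%:R <= n1%:R + 1 :> R) by rewrite natr1 ler_nat.
have g3 : (p3%:R <= n3%:R + 1 :> R) by rewrite natr1 ler_nat.
have r1 : (p1%:R <= b2%:R :> R) by rewrite ler_nat; apply: leq_trans hc1 _; apply: leq_ltn_trans hn1 h12.
have r3 : (b2%:R + 2 <= p3%:R :> R) by have := hB2; rewrite -(ler_nat R) -addn2 natrD.
set c := tB + kB.
have c0 : 0 <= c by rewrite /c addr_ge0.
have m1 : (p1%:R - 1) * c <= n1%:R * c by rewrite ler_wpM2r //; lra.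
have m3 : (p3%:R - 1) * c <= n3%:R * c by rewrite ler_wpM2r //; lra.
set v := tA - kA * J + c.
have [v0|v0] := leP 0 v.
- right.
  have : v * (b2%:R + 1) <= v * p3%:R by rewrite ler_wpM2l //; lra.
  rewrite T3E /v /c.
  move: m3 k3 f3 e3; rewrite /c => m3 k3 f3 e3.
  have ee : n3%:R * (tB + kB) = n3%:R * tB + n3%:R * kB by ring.
  have ee2 : kA * (W - p3%:R * J) = kA * W - p3%:R * (kA * J) by ring.
  have ee3 : kA * (W - (b2.+1)%:R * J) = kA * W - (b2%:R + 1) * (kA * J) by rewrite -natr1; ring.
  lra.
- left.
  have : v * b2%:R <= v * p1%:R.
    rewrite ler_wnM2l //; lra.
  rewrite T1E /v /c.
  move: m1 k1 f1 e1; rewrite /c => m1 k1 f1 e1.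
  have ee3 : kA * (W - (b2.+1)%:R * J) = kA * W - (b2%:R + 1) * (kA * J) by rewrite -natr1; ring.
  move: v0; rewrite /v /c => v0; lra.
Qed.
End Key.


Lemma time_ge0 (R : realType) (kA kB tA tB : R) s :
  0 <= kA -> 0 <= kB -> 0 <= tA -> 0 <= tB -> 0 <= sched_time kA kB tA tB s.
Proof.
move=> hkA hkB htA htB; rewrite /sched_time; apply: sumr_ge0 => p _.
rewrite /batch_time; case: p.1; apply: addr_ge0 => //; apply: mulr_ge0 => //;
  apply: exprn_ge0; exact: ler0n.
Qed.

Lemma exists_valid a b : exists s, valid_schedule a b s.
Proof.
case: a => [|a]; case: b => [|b].
- by exists [::].
- by exists [:: (false, b.+1)]; rewrite /valid_schedule /= addn0 !eqxx.
- by exists [:: (true, a.+1)]; rewrite /valid_schedule /= addn0 !eqxx.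
- by exists [:: (true, a.+1); (false, b.+1)]; rewrite /valid_schedule /= !addn0 !eqxx.
Qed.

Lemma has_inf_f (R : realType) (kA kB tA tB : R) a b :
  0 <= kA -> 0 <= kB -> 0 <= tA -> 0 <= tB ->
  has_inf [set sched_time kA kB tA tB s | s in [set s | valid_schedule a b s]].
Proof.
move=> hkA hkB htA htB; split.
  have [s hs] := exists_valid a b; by exists (sched_time kA kB tA tB s); exists s.
exists 0 => x [s _ <-]; exact: time_ge0.
Qed.

Theorem theorem1 (R : realType) (kA kB tA tB L : R)
  (hkA : 0 <= kA) (hkB : 0 <= kB) (htA : 0 <= tA) (htB : 0 <= tB)
  (a b1 b2 b3 : nat) :
  (b1 < b2)%N -> (b2 < b3)%N ->
  f kA kB tA tB a b1 <= L -> f kA kB tA tB a b3 <= L ->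
  f kA kB tA tB a b2 <= L.
Proof.
move=> h12 h23 hf1 hf3.
rewrite leNgt; apply/negP => hlt.
have e0 : 0 < f kA kB tA tB a b2 - L by rewrite subr_gt0.
have [t1 [s1 hs1 <-] ht1] := inf_adherent e0 (has_inf_f a b1 hkA hkB htA htB).
have [t3 [s3 hs3 <-] ht3] := inf_adherent e0 (has_inf_f a b3 hkA hkB htA htB).
have [s2 [hs2 hT]] := @key R kA kB tA tB hkA hkB htB _ _ _ _ _ _ h12 h23 hs1 hs3.
have [_ hlb] := has_inf_f a b2 hkA hkB htA htB.
have hf2 : f kA kB tA tB a b2 <= sched_time kA kB tA tB s2.
  by apply: (ge_inf hlb); exists s2.
rewrite /f in hf1 hf3 ht1 ht3 hf2 hlt e0 *.
case: hT => hT; lra.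
Qed.
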